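(* The map $f$ is strictly increasing on $[a_0-1,a_0]$: if $x_1,x_2\in[a_0-1,a_0]$ and $x_1<x_2$, then $f(x_1)<f(x_2)$.
   Context: Let $Q=(q_k)_{k\ge1}$ be a sequence of integers with $q_k\ge 2$, and let $q\ge 2$ be an integer with $q_k\le q$ for all $k$. Put $a_0=\sum_{k\ge1}\frac{q_{2k}-1}{q_1q_2\cdots q_{2k}}$. Every $x\in[a_0-1,a_0]$ can be written as $x=\Delta^{-Q}_{\varepsilon_1\varepsilon_2\ldots}:=\sum_{k\ge1}\frac{(-1)^k\varepsilon_k}{q_1q_2\cdots q_k}$ with digits $\varepsilon_k\in\{0,1,\ldots,q_k-1\}$. Nega-$Q$-rational points have two representations, $\Delta^{-Q}_{\varepsilon_1\ldots\varepsilon_{m}[q_{m+1}-1]0[q_{m+3}-1]0\ldots}=\Delta^{-Q}_{\varepsilon_1\ldots\varepsilon_{m-1}[\varepsilon_m-1]0[q_{m+2}-1]0[q_{m+4}-1]0\ldots}$, and by convention only the first is used; other points have a unique representation. The map $f:[a_0-1,a_0]\to\mathbb R$ is $f\left(\Delta^{-Q}_{\varepsilon_1\varepsilon_2\ldots}\right)=\sum_{n\ge1}\frac{\varepsilon_n}{(-q)^n}$. *)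

(* Defs.v *)
From Stdlib Require Import Reals Lra Lia ClassicalEpsilon.
Open Scope R_scope.

(* A sequence Q = (q_k)_{k>=1} is represented by Qs : nat -> nat, only the
   values at indices k >= 1 being relevant.  Digit sequences eps : nat -> nat
   likewise use indices k >= 1 (eps 0 is ignored). *)

Fixpoint prodQ (Qs : nat -> nat) (k : nat) : R :=
  match k with
  | O => 1
  | S k' => prodQ Qs k' * INR (Qs (S k'))
  end.

Definition series_sum (u : nat -> R) : R :=
  epsilon (inhabits 0) (fun l => infinite_sum u l).

Definition a0 (Qs : nat -> nat) : R :=
  series_sum (fun n => (INR (Qs (2 * (n + 1))%nat) - 1) / prodQ Qs (2 * (n + 1))).

Definition valid_digits (Qs : nat -> nat) (eps : nat -> nat) : Prop :=
  forall k, (1 <= k)%nat -> (eps k < Qs k)%nat.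

Definition nega_Q_repr (Qs : nat -> nat) (eps : nat -> nat) (x : R) : Prop :=
  valid_digits Qs eps /\
  infinite_sum (fun n => (-1) ^ (n + 1) * INR (eps (n + 1)%nat) / prodQ Qs (n + 1)) x.

(* eps has the form of the SECOND (discarded) representation of a
   nega-Q-rational point:
   eps_1 ... eps_{m-1} [e_m - 1] 0 [q_{m+2}-1] 0 [q_{m+4}-1] 0 ...
   with 1 <= e_m <= q_m - 1, i.e. eps_m <= q_m - 2, m >= 1. *)
Definition second_form (Qs : nat -> nat) (eps : nat -> nat) : Prop :=
  exists m, (1 <= m)%nat /\ (eps m + 1 < Qs m)%nat /\
    forall j, eps (m + 1 + 2 * j)%nat = 0%nat /\
              eps (m + 2 + 2 * j)%nat = (Qs (m + 2 + 2 * j)%nat - 1)%nat.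

Definition conv_repr (Qs : nat -> nat) (x : R) (eps : nat -> nat) : Prop :=
  nega_Q_repr Qs eps x /\ ~ second_form Qs eps.

Definition digits (Qs : nat -> nat) (x : R) : nat -> nat :=
  epsilon (inhabits (fun _ => 0%nat)) (conv_repr Qs x).

Definition fQ (Qs : nat -> nat) (q : nat) (x : R) : R :=
  series_sum (fun n => INR (digits Qs x (n + 1)%nat) / (- INR q) ^ (n + 1)).

(* Main.v *)
Require Import Defs.
From Stdlib Require Import Reals Lra Lia ClassicalEpsilon Classical ZArith.
Open Scope R_scope.

Fixpoint part (t : nat -> R) (N : nat) : R :=
  match N with O => 0 | S n => part t n + t (S n) end.

Lemma sum_part (t : nat -> R) (n : nat) :
  sum_f_R0 (fun k => t (k + 1)%nat) n = part t (S n).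
Proof.
  induction n as [|n IH]; simpl.
  - lra.
  - rewrite IH. simpl. replace (n + 1)%nat with (S n) by lia.
    replace (S (n+1)) with (S (S n)) by lia. reflexivity.
Qed.

Lemma inf_sum_part (t : nat -> R) (l : R) :
  infinite_sum (fun k => t (k + 1)%nat) l <-> Un_cv (part t) l.
Proof.
  split.
  - intros H e He. destruct (H e He) as [N HN]. exists (S N).
    intros n Hn. destruct n as [|n]; [lia|].
    rewrite <- sum_part. apply HN. lia.
  - intros H e He. destruct (H e He) as [N HN]. exists N.
    intros n Hn. rewrite sum_part. apply HN. lia.
Qed.

Lemma cv_inv (a : nat -> R) : (forall N, INR N + 1 <= a N) -> Un_cv (fun N => / a N) 0.
Proof.
  intros Ha e He.
  destruct (archimed (/ e)) as [H1 H2].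
  assert (Hup : (0 <= up (/e))%Z).
  { apply le_IZR. assert (0 < /e) by (apply Rinv_0_lt_compat; lra). lra. }
  exists (Z.to_nat (up (/ e))). intros n Hn.
  unfold Rdist. rewrite Rminus_0_r.
  assert (HN : IZR (up (/e)) <= INR n).
  { rewrite <- (Z2Nat.id (up (/e))) by lia. rewrite <- INR_IZR_INZ. apply le_INR. lia. }
  specialize (Ha n). assert (0 <= INR n) by apply pos_INR.
  assert (Hpos : 0 < a n) by lra.
  rewrite Rabs_pos_eq by (left; apply Rinv_0_lt_compat; lra).
  assert (/ e < a n) by lra.
  apply Rinv_lt_contravar in H0; [| apply Rmult_lt_0_compat; [apply Rinv_0_lt_compat|]; lra].
  rewrite Rinv_inv in H0. lra.
Qed.

Lemma cv_ge (U : nat -> R) (l a : R) (N : nat) :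
  (forall n, (N <= n)%nat -> a <= U n) -> Un_cv U l -> a <= l.
Proof.
  intros HU Hl. destruct (Rle_or_lt a l) as [|Hlt]; [assumption|].
  destruct (Hl (a - l)) as [M HM]; [lra|].
  specialize (HM (max N M) ltac:(lia)). specialize (HU (max N M) ltac:(lia)).
  unfold Rdist in HM. apply Rabs_def2 in HM. lra.
Qed.

Lemma cv_gt (U : nat -> R) (l : R) : 0 < l -> Un_cv U l -> forall N, exists n, (N <= n)%nat /\ 0 < U n.
Proof.
  intros Hl HU N. destruct (HU l Hl) as [M HM]. exists (max N M). split; [lia|].
  specialize (HM (max N M) ltac:(lia)). unfold Rdist in HM. apply Rabs_def2 in HM. lra.
Qed.

Lemma pow2_ge (n : nat) : INR n + 1 <= 2 ^ n.
Proof.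
  induction n as [|n IH]; [simpl; lra|]. rewrite S_INR. simpl (2 ^ S n). 
  assert (1 <= 2 ^ n) by (apply pow_R1_Rle; lra). lra.
Qed.

Lemma zero_of_pow2 (c : R) : 0 <= c -> (forall j, 2 ^ j * c <= 1) -> c = 0.
Proof.
  intros Hc H. destruct Hc as [Hc|]; [|auto].
  exfalso. destruct (archimed (/ c)) as [H1 _].
  assert (Hup : (0 <= up (/c))%Z).
  { apply le_IZR. assert (0 < /c) by (apply Rinv_0_lt_compat; lra). lra. }
  set (n := Z.to_nat (up (/c))).
  assert (HN : IZR (up (/c)) = INR n).
  { unfold n. rewrite INR_IZR_INZ. f_equal. lia. }
  specialize (H n). pose proof (pow2_ge n).
  assert (/ c < 2 ^ n) by lra.
  apply (Rmult_lt_compat_r c) in H2; [|lra]. rewrite Rinv_l in H2; lra.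
Qed.

Definition HQ (Qs : nat -> nat) (q : nat) :=
  forall k, (1 <= k)%nat -> (2 <= Qs k)%nat /\ (Qs k <= q)%nat.

Lemma Q_ge2 Qs q k : HQ Qs q -> (1 <= k)%nat -> 2 <= INR (Qs k).
Proof. intros H Hk. destruct (H k Hk). apply le_INR in H0. simpl in H0. lra. Qed.

Lemma Q_leq Qs q k : HQ Qs q -> (1 <= k)%nat -> INR (Qs k) <= INR q.
Proof. intros H Hk. destruct (H k Hk). apply le_INR; auto. Qed.

Lemma P_ge Qs q n : HQ Qs q -> 2 ^ n <= prodQ Qs n.
Proof.
  intros H. induction n as [|n IH]; simpl; [lra|].
  pose proof (Q_ge2 Qs q (S n) H ltac:(lia)).
  assert (0 < 2 ^ n) by (apply pow_lt; lra). nra.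
Qed.

Lemma P_pos Qs q n : HQ Qs q -> 0 < prodQ Qs n.
Proof. intros H. pose proof (P_ge Qs q n H). assert (0 < 2 ^ n) by (apply pow_lt; lra). lra. Qed.

Lemma P_cv Qs q : HQ Qs q -> Un_cv (fun N => / prodQ Qs N) 0.
Proof. intros H. apply cv_inv. intros N. pose proof (pow2_ge N). pose proof (P_ge Qs q N H). lra. Qed.

Lemma qpow_cv q : (2 <= q)%nat -> Un_cv (fun N => / (INR q) ^ N) 0.
Proof. intros H. apply cv_inv. intros N. pose proof (pow2_ge N).
  assert (2 ^ N <= INR q ^ N). { apply pow_incr. apply le_INR in H. simpl in H. lra. } lra. Qed.

Lemma cv_const (c : R) : Un_cv (fun _ => c) c.
Proof. intros e He. exists O. intros. unfold Rdist. rewrite Rminus_diag, Rabs_R0. lra. Qed.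

Lemma m1_sq k : (-1) ^ k * (-1) ^ k = 1.
Proof. induction k as [|k IH]; simpl; [lra|].
  replace (-1 * (-1) ^ k * (-1 * (-1) ^ k)) with ((-1) ^ k * (-1) ^ k) by ring. exact IH. Qed.

Lemma m1_cases k : (-1) ^ k = 1 \/ (-1) ^ k = -1.
Proof. induction k as [|k IH]; simpl; [lra|]. destruct IH as [-> | ->]; lra. Qed.

Lemma growing_le (U : nat -> R) : (forall n, U n <= U (S n)) -> forall n k, (n <= k)%nat -> U n <= U k.
Proof. intros H n k Hk. induction Hk; [lra|]. specialize (H m). lra. Qed.

Lemma min_ex (P : nat -> Prop) : forall n, P n -> exists d, P d /\ forall d', P d' -> (d <= d')%nat.
Proof.
  assert (forall n, (exists k, (k <= n)%nat /\ P k) -> exists d, P d /\ forall d', P d' -> (d <= d')%nat).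
  { induction n as [|n IH].
    - intros [k [Hk Pk]]. exists k. split; auto. intros. lia.
    - intros [k [Hk Pk]].
      destruct (classic (exists k, (k <= n)%nat /\ P k)) as [E|NE]; [apply IH; auto|].
      assert (k = S n). { destruct (Nat.eq_dec k (S n)); auto. exfalso. apply NE. exists k. split; [lia|auto]. }
      subst k. exists (S n). split; auto. intros d' Pd'.
      destruct (le_lt_dec (S n) d'); auto. exfalso. apply NE. exists d'. split; [lia|auto]. }
  intros n Pn. apply (H n). exists n. split; auto.
Qed.

Lemma max_ex (P : nat -> Prop) : P O -> forall n, exists d, (d <= n)%nat /\ P d /\ forall d', (d' <= n)%nat -> P d' -> (d' <= d)%nat.
Proof.
  intros P0. induction n as [|n IH].
  - exists O. split; [lia|]. split; [auto|intros; lia].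
  - destruct (classic (P (S n))) as [H|H].
    + exists (S n). split; [lia|]. split; auto.
    + destruct IH as [d [Hd [Pd Hm]]]. exists d. split; [lia|]. split; auto.
      intros d' Hd' Pd'. destruct (Nat.eq_dec d' (S n)) as [->|]; [contradiction|]. apply Hm; auto. lia.
Qed.

Definition xterm Qs (d : nat -> nat) k := (-1) ^ k * INR (d k) / prodQ Qs k.
Definition fterm (q : nat) (d : nat -> nat) k := INR (d k) / (- INR q) ^ k.

Lemma neg_pow (a : R) k : (- a) ^ k = (-1) ^ k * a ^ k.
Proof. replace (- a) with (-1 * a) by ring. apply Rpow_mult_distr. Qed.

Lemma Rdiv_le_0_compat a b : 0 <= a -> 0 < b -> 0 <= a / b.
Proof. intros. unfold Rdiv. apply Rmult_le_pos; [lra|]. left. apply Rinv_0_lt_compat; lra. Qed.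

Lemma fterm_eq q d k : (0 < INR q) -> fterm q d k = (-1) ^ k * INR (d k) / INR q ^ k.
Proof.
  intros Hq. unfold fterm. rewrite neg_pow. pose proof (m1_sq k).
  assert ((-1) ^ k <> 0) by (intro Hz; rewrite Hz in H; lra).
  assert (INR q ^ k <> 0) by (apply pow_nonzero; lra).
  replace (INR (d k)) with ((-1) ^ k * (-1) ^ k * INR (d k)) at 1 by (rewrite H; ring).
  field. auto.
Qed.

Lemma compare Qs q A B xA xB fA fB :
  (2 <= q)%nat -> HQ Qs q -> valid_digits Qs A -> valid_digits Qs B ->
  Un_cv (part (xterm Qs A)) xA -> Un_cv (part (xterm Qs B)) xB ->
  Un_cv (part (fterm q A)) fA -> Un_cv (part (fterm q B)) fB ->
  xA < xB -> fA < fB.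
Proof.
  intros hq hQ vA vB cxA cxB cfA cfB hlt.
  assert (hqR : 2 <= INR q) by (apply le_INR in hq; simpl in hq; lra).
  assert (Hex : exists n, (1 <= n)%nat /\ A n <> B n).
  { apply NNPP. intros Hn.
    assert (Heq : forall N, part (xterm Qs A) N = part (xterm Qs B) N).
    { induction N as [|N IH]; simpl; [reflexivity|]. rewrite IH. unfold xterm.
      destruct (Nat.eq_dec (A (S N)) (B (S N))) as [e|e]; [rewrite e; reflexivity|].
      exfalso. apply Hn. exists (S N). split; [lia|auto]. }
    assert (Un_cv (part (xterm Qs A)) xB).
    { intros e He. destruct (cxB e He) as [M HM]. exists M. intros n Hnn. rewrite Heq. auto. }
    pose proof (UL_sequence _ _ _ cxA H). lra. }
  destruct Hex as [n0 Hn0].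
  destruct (min_ex (fun n => (1 <= n)%nat /\ A n <> B n) n0 Hn0) as [m [[Hm1 Hm2] Hmin]].
  assert (Hbefore : forall k, (1 <= k)%nat -> (k < m)%nat -> A k = B k).
  { intros k Hk1 Hk2. destruct (Nat.eq_dec (A k) (B k)) as [|n1]; auto.
    specialize (Hmin k (conj Hk1 n1)). lia. }
  set (dl := fun k => INR (A k) - INR (B k)).
  set (s := if Nat.ltb (B m) (A m) then (-1) ^ m else - (-1) ^ m).
  set (c := fun k => s * (-1) ^ k * dl k).
  assert (Hs : s = 1 \/ s = -1).
  { unfold s. destruct (Nat.ltb _ _); destruct (m1_cases m) as [-> | ->]; lra. }
  assert (Hcm : 1 <= c m).
  { unfold c, s, dl. pose proof (m1_sq m).
    destruct (Nat.ltb (B m) (A m)) eqn:E.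
    - apply Nat.ltb_lt in E.
      assert (INR (B m) + 1 <= INR (A m)).
      { rewrite <- S_INR. apply le_INR. auto. }
      replace ((-1) ^ m * (-1) ^ m * (INR (A m) - INR (B m))) with (1 * (INR (A m) - INR (B m))) by (rewrite H; ring). lra.
    - apply Nat.ltb_ge in E. assert (A m < B m)%nat by lia.
      assert (INR (A m) + 1 <= INR (B m)).
      { rewrite <- S_INR. apply le_INR. auto. }
      replace (- (-1) ^ m * (-1) ^ m * (INR (A m) - INR (B m))) with (- (1 * (INR (A m) - INR (B m)))) by (rewrite <- H; ring). lra. }
  assert (Hck : forall k, (1 <= k)%nat -> 0 <= c k + INR (Qs k) - 1).
  { intros k Hk. unfold c, dl.
    assert (Habs : Rabs (s * (-1) ^ k) = 1).
    { rewrite Rabs_mult. destruct Hs as [-> | ->]; destruct (m1_cases k) as [-> | ->];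
      repeat (unfold Rabs; destruct Rcase_abs); lra. }
    pose proof (vA k Hk) as a1. pose proof (vB k Hk) as b1.
    assert (INR (A k) + 1 <= INR (Qs k)) by (rewrite <- S_INR; apply le_INR; lia).
    assert (INR (B k) + 1 <= INR (Qs k)) by (rewrite <- S_INR; apply le_INR; lia).
    pose proof (pos_INR (A k)). pose proof (pos_INR (B k)).
    assert (Rabs (s * (-1) ^ k * (INR (A k) - INR (B k))) <= INR (Qs k) - 1).
    { rewrite Rabs_mult, Habs, Rmult_1_l. apply Rabs_le. lra. }
    revert H3; unfold Rabs at 1; destruct Rcase_abs; lra. }
  set (Xr := fun N => s * (part (xterm Qs A) N - part (xterm Qs B) N) - / prodQ Qs N).
  set (Fr := fun N => s * (part (fterm q A) N - part (fterm q B) N) - / (INR q) ^ N).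
  assert (HXinc : forall N, Xr (S N) = Xr N + (c (S N) + INR (Qs (S N)) - 1) / prodQ Qs (S N)).
  { intros N. unfold Xr, c, dl, xterm. simpl part. simpl prodQ.
    pose proof (P_pos Qs q N hQ). pose proof (Q_ge2 Qs q (S N) hQ ltac:(lia)).
    simpl pow. field; repeat split; lra. }
  assert (HFinc : forall N, Fr (S N) = Fr N + (c (S N) + INR q - 1) / (INR q) ^ (S N)).
  { intros N. unfold Fr, c, dl. simpl part. rewrite !fterm_eq by lra.
    assert (0 < INR q ^ N) by (apply pow_lt; lra).
    simpl pow. field; repeat split; lra. }
  assert (Hpre : forall N, (N < m)%nat -> part (xterm Qs A) N = part (xterm Qs B) N /\ part (fterm q A) N = part (fterm q B) N).
  { induction N as [|N IH]; intros HN; simpl; [split; reflexivity|].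
    destruct (IH ltac:(lia)) as [e1 e2]. rewrite e1, e2.
    unfold xterm, fterm. rewrite (Hbefore (S N)) by lia. split; reflexivity. }
  assert (HXm : Xr m = (c m - 1) / prodQ Qs m).
  { destruct m as [|m']; [lia|]. rewrite HXinc. unfold Xr.
    destruct (Hpre m' ltac:(lia)) as [e1 _]. rewrite e1.
    simpl prodQ. pose proof (P_pos Qs q m' hQ). pose proof (Q_ge2 Qs q (S m') hQ ltac:(lia)).
    field; repeat split; lra. }
  assert (HFm : Fr m = (c m - 1) / INR q ^ m).
  { destruct m as [|m']; [lia|]. rewrite HFinc. unfold Fr.
    destruct (Hpre m' ltac:(lia)) as [_ e2]. rewrite e2.
    assert (0 < INR q ^ m') by (apply pow_lt; lra).
    simpl pow. field; repeat split; lra. }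
  assert (Hind : forall j, 0 <= Xr (m + j)%nat /\ 0 <= Fr (m + j)%nat /\ (0 < Xr (m + j)%nat -> 0 < Fr (m + j)%nat)).
  { induction j as [|j IH].
    - rewrite Nat.add_0_r, HXm, HFm. pose proof (P_pos Qs q m hQ).
      assert (0 < INR q ^ m) by (apply pow_lt; lra).
      split; [|split].
      + apply Rdiv_le_0_compat; lra.
      + apply Rdiv_le_0_compat; lra.
      + intros Hp. assert (0 < c m - 1).
        { destruct (Rle_or_lt (c m - 1) 0); auto. exfalso.
          assert ((c m - 1) / prodQ Qs m <= 0).
          { unfold Rdiv. assert (0 < / prodQ Qs m) by (apply Rinv_0_lt_compat; lra). nra. }
          lra. }
        apply Rdiv_lt_0_compat; lra.
    - replace (m + S j)%nat with (S (m + j)) by lia.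
      rewrite HXinc, HFinc. destruct IH as [I1 [I2 I3]].
      pose proof (Hck (S (m + j)) ltac:(lia)).
      pose proof (Q_leq Qs q (S (m + j)) hQ ltac:(lia)).
      pose proof (P_pos Qs q (S (m + j)) hQ).
      assert (0 < INR q ^ S (m + j)) by (apply pow_lt; lra).
      assert (0 <= (c (S (m + j)) + INR (Qs (S (m + j))) - 1) / prodQ Qs (S (m + j))) by (apply Rdiv_le_0_compat; lra).
      assert (0 <= (c (S (m + j)) + INR q - 1) / INR q ^ S (m + j)) by (apply Rdiv_le_0_compat; lra).
      split; [lra|split; [lra|]].
      intros Hp. destruct (Rle_or_lt (Xr (m + j)%nat) 0) as [Hx|Hx].
      + assert (0 < c (S (m + j)) + INR (Qs (S (m + j))) - 1).
        { destruct (Rle_or_lt (c (S (m + j)) + INR (Qs (S (m + j))) - 1) 0); auto.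
          assert (Hz : c (S (m + j)) + INR (Qs (S (m + j))) - 1 = 0) by lra.
          rewrite Hz in Hp. unfold Rdiv in Hp. rewrite Rmult_0_l in Hp. lra. }
        assert (0 < (c (S (m + j)) + INR q - 1) / INR q ^ S (m + j)) by (apply Rdiv_lt_0_compat; lra).
        lra.
      + specialize (I3 Hx). lra. }
  assert (HcX : Un_cv Xr (s * (xA - xB) - 0)).
  { unfold Xr. apply CV_minus; [|apply (P_cv Qs q hQ)]. apply CV_mult; [apply cv_const|]. apply CV_minus; auto. }
  assert (HcF : Un_cv Fr (s * (fA - fB) - 0)).
  { unfold Fr. apply CV_minus; [|apply (qpow_cv q hq)]. apply CV_mult; [apply cv_const|]. apply CV_minus; auto. }
  assert (HXge : 0 <= s * (xA - xB) - 0).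
  { apply (cv_ge Xr _ 0 m); auto. intros n Hn. replace n with (m + (n - m))%nat by lia. apply Hind. }
  assert (Hsm : s = -1).
  { destruct Hs as [->|]; auto. lra. }
  assert (Hpos : 0 < s * (xA - xB) - 0) by (rewrite Hsm; lra).
  destruct (cv_gt Xr _ Hpos HcX m) as [n [Hn Hxn]].
  assert (HFn : 0 < Fr n).
  { replace n with (m + (n - m))%nat in * by lia. apply Hind. auto. }
  assert (Fr n <= s * (fA - fB) - 0).
  { apply (cv_ge Fr _ (Fr n) n); auto. apply growing_le.
    intros k. rewrite HFinc.
    pose proof (Hck (S k) ltac:(lia)).
    pose proof (Q_leq Qs q (S k) hQ ltac:(lia)).
    assert (0 < INR q ^ S k) by (apply pow_lt; lra).
    assert (0 <= (c (S k) + INR q - 1) / INR q ^ S k) by (apply Rdiv_le_0_compat; lra). lra. }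
  rewrite Hsm in H. lra.
Qed.

Lemma f_conv Qs q d : (2 <= q)%nat -> HQ Qs q -> valid_digits Qs d ->
  exists l, infinite_sum (fun n => INR (d (n + 1)%nat) / (- INR q) ^ (n + 1)) l.
Proof.
  intros hq hQ vd.
  assert (hqR : 2 <= INR q) by (apply le_INR in hq; simpl in hq; lra).
  set (An := fun n => INR (d (n + 1)%nat) / (- INR q) ^ (n + 1)).
  assert (Hb : forall n, 0 <= Rabs (An n) <= 1 * (/ INR q) ^ n).
  { intros n. split; [apply Rabs_pos|]. unfold An.
    change (INR (d (n + 1)%nat) / (- INR q) ^ (n + 1)) with (fterm q d (n+1)).
    rewrite fterm_eq by lra.
    assert (0 < INR q ^ n) by (apply pow_lt; lra).
    assert (0 < INR q ^ (n+1)) by (apply pow_lt; lra).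
    assert (Ha : Rabs ((-1) ^ (n + 1) * INR (d (n + 1)%nat) / INR q ^ (n + 1)) = INR (d (n + 1)%nat) / INR q ^ (n + 1)).
    { unfold Rdiv. rewrite Rmult_assoc, Rabs_mult. rewrite (Rabs_pos_eq (_ * _)).
      - destruct (m1_cases (n+1)) as [-> | ->]; unfold Rabs; destruct Rcase_abs; lra.
      - apply Rmult_le_pos; [apply pos_INR|left; apply Rinv_0_lt_compat; lra]. }
    rewrite Ha.
    pose proof (vd (n+1)%nat ltac:(lia)). pose proof (Q_leq Qs q (n+1) hQ ltac:(lia)).
    assert (INR (d (n+1)%nat) + 1 <= INR (Qs (n+1)%nat)) by (rewrite <- S_INR; apply le_INR; lia).
    rewrite pow_inv. replace (n+1)%nat with (S n) in * by lia. simpl pow.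
    rewrite Rmult_1_l.
    apply (Rmult_le_reg_r (INR q * INR q ^ n)); [nra|].
    unfold Rdiv. rewrite Rmult_assoc, Rinv_l by nra.
    replace (/ INR q ^ n * (INR q * INR q ^ n)) with (INR q) by (field; lra). lra. }
  assert (Hg : {l | Un_cv (fun N => sum_f_R0 (fun n => 1 * (/ INR q) ^ n) N) l}).
  { exists (/ (1 - / INR q)). apply (GP_infinite (/ INR q)).
    rewrite Rabs_pos_eq; [|left; apply Rinv_0_lt_compat; lra].
    rewrite <- Rinv_1. apply Rinv_lt_contravar; lra. }
  destruct (cv_cauchy_2 An (cauchy_abs An (cv_cauchy_1 _ (Rseries_CV_comp _ _ Hb Hg)))) as [l Hl].
  exists l. exact Hl.
Qed.

Definition step_spec (q : nat) (z : R) (b : bool) (d : nat) : Prop :=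
  (d <= q - 1)%nat /\ 0 <= INR q * z - INR d <= 1 /\
  (if b then forall d', (d' <= q-1)%nat -> 0 <= INR q * z - INR d' <= 1 -> (d' <= d)%nat
        else forall d', (d' <= q-1)%nat -> 0 <= INR q * z - INR d' <= 1 -> (d <= d')%nat).

Lemma step_ex (q : nat) (z : R) (b : bool) :
  exists d : nat, (2 <= q)%nat -> 0 <= z <= 1 -> step_spec q z b d.
Proof.
  destruct (classic ((2 <= q)%nat /\ 0 <= z <= 1)) as [[hq hz]|Hn];
    [|exists O; intros; exfalso; tauto].
  assert (hqR : 2 <= INR q) by (apply le_INR in hq; simpl in hq; lra).
  assert (Hq1 : INR (q - 1) = INR q - 1) by (rewrite minus_INR by lia; simpl; lra).
  unfold step_spec.
  destruct b.
  - destruct (max_ex (fun d => INR d <= INR q * z) ltac:(simpl; nra) (q-1)) as [d [Hd [Pd Hm]]].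
    exists d. intros _ _. split; auto. split; [split|].
    + lra.
    + destruct (Nat.eq_dec d (q-1)) as [->|Hne].
      * rewrite Hq1. nra.
      * destruct (Rle_or_lt (INR q * z) (INR (S d))) as [Hl|Hl].
        -- rewrite S_INR in Hl. lra.
        -- exfalso. assert (S d <= d)%nat by (apply Hm; [lia|lra]). lia.
    + intros d' Hd' [H1 H2]. apply Hm; auto. lra.
  - assert (Pq : (fun d => (d <= q-1)%nat /\ INR q * z - INR d <= 1) (q-1)%nat).
    { split; [lia|]. rewrite Hq1. nra. }
    destruct (min_ex _ _ Pq) as [d [[Hd Pd] Hm]].
    exists d. intros _ _. split; auto. split; [split|].
    + destruct d as [|d'].
      * simpl. nra.
      * destruct (Rle_or_lt (INR q * z - INR d') 1) as [Hl|Hl].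
        -- exfalso. assert (S d' <= d')%nat by (apply Hm; split; [lia|lra]). lia.
        -- rewrite S_INR. lra.
    + lra.
    + intros d' Hd' [H1 H2]. apply Hm. split; auto.
Qed.

Definition chooseD (q : nat) (z : R) (b : bool) : nat :=
  proj1_sig (constructive_indefinite_description _ (step_ex q z b)).

Lemma chooseD_spec q z b : (2 <= q)%nat -> 0 <= z <= 1 -> step_spec q z b (chooseD q z b).
Proof. unfold chooseD. destruct (constructive_indefinite_description _ _) as [d Hd]. simpl. auto. Qed.

Fixpoint zs (Qs : nat -> nat) (z : R) (k : nat) : R :=
  match k with
  | O => z
  | S k' => INR (Qs (S k')) * zs Qs z k' - INR (chooseD (Qs (S k')) (zs Qs z k') (Nat.even (S k')))
  end.

Definition dl (Qs : nat -> nat) (z : R) (k : nat) : nat :=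
  match k with
  | O => O
  | S k' => chooseD (Qs (S k')) (zs Qs z k') (Nat.even (S k'))
  end.

Definition epsOf Qs z k : nat := if Nat.even k then dl Qs z k else (Qs k - 1 - dl Qs z k)%nat.

Lemma part_S t n : part t (S n) = part t n + t (S n). Proof. reflexivity. Qed.
Lemma prodQ_S Qs n : prodQ Qs (S n) = prodQ Qs n * INR (Qs (S n)). Proof. reflexivity. Qed.

Section Ex.
Variables (Qs : nat -> nat) (q : nat) (hq : (2 <= q)%nat) (hQ : HQ Qs q) (z : R) (hz : 0 <= z <= 1).

Lemma zs_range k : 0 <= zs Qs z k <= 1.
Proof.
  induction k as [|k IH]; [exact hz|].
  destruct (chooseD_spec (Qs (S k)) (zs Qs z k) (Nat.even (S k)) (proj1 (hQ (S k) ltac:(lia))) IH) as [_ [H _]].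
  simpl. exact H.
Qed.

Lemma dl_spec k : step_spec (Qs (S k)) (zs Qs z k) (Nat.even (S k)) (dl Qs z (S k)).
Proof. apply chooseD_spec; [apply (hQ (S k)); lia | apply zs_range]. Qed.

Lemma zs_S k : zs Qs z (S k) = INR (Qs (S k)) * zs Qs z k - INR (dl Qs z (S k)).
Proof. reflexivity. Qed.

Lemma Zpart N : z = part (fun k => INR (dl Qs z k) / prodQ Qs k) N + zs Qs z N / prodQ Qs N.
Proof.
  induction N as [|N IH]; [simpl; field|].
  transitivity (part (fun k => INR (dl Qs z k) / prodQ Qs k) N + zs Qs z N / prodQ Qs N); [exact IH|].
  rewrite part_S, zs_S, prodQ_S.
  pose proof (P_pos Qs q N hQ). pose proof (Q_ge2 Qs q (S N) hQ ltac:(lia)).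
  field. split; lra.
Qed.

Lemma eps_valid : valid_digits Qs (epsOf Qs z).
Proof.
  intros k Hk. destruct k as [|k]; [lia|].
  destruct (dl_spec k) as [Hd _]. destruct (hQ (S k) Hk).
  unfold epsOf. destruct (Nat.even (S k)); lia.
Qed.

End Ex.

Definition Eterm Qs k := if Nat.even k then (INR (Qs k) - 1) / prodQ Qs k else 0.
Definition Oterm Qs k := if Nat.even k then 0 else (INR (Qs k) - 1) / prodQ Qs k.

Lemma m1_even k : (-1) ^ k = if Nat.even k then 1 else -1.
Proof.
  induction k as [|k IH]; [reflexivity|].
  change ((-1) ^ S k) with (-1 * (-1) ^ k). rewrite IH, Nat.even_succ, <- Nat.negb_even.
  destruct (Nat.even k); simpl; lra.
Qed.

Section S1.
Variables (Qs : nat -> nat) (q : nat) (hq : (2 <= q)%nat) (hQ : HQ Qs q).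

Lemma EO N : part (Eterm Qs) N + part (Oterm Qs) N = 1 - / prodQ Qs N.
Proof.
  induction N as [|N IH]; [simpl; field|].
  rewrite !part_S.
  assert (Eterm Qs (S N) + Oterm Qs (S N) = (INR (Qs (S N)) - 1) / prodQ Qs (S N)).
  { unfold Eterm, Oterm. destruct (Nat.even (S N)); lra. }
  rewrite prodQ_S in *.
  pose proof (P_pos Qs q N hQ). pose proof (Q_ge2 Qs q (S N) hQ ltac:(lia)).
  assert (prodQ Qs N <> 0) by lra. assert (INR (Qs (S N)) <> 0) by lra.
  replace (1 - / (prodQ Qs N * INR (Qs (S N)))) with ((1 - / prodQ Qs N) + (INR (Qs (S N)) - 1) / (prodQ Qs N * INR (Qs (S N)))) by (field; auto).
  lra.
Qed.

Lemma O_nonneg N : 0 <= part (Oterm Qs) N.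
Proof.
  induction N as [|N IH]; [simpl; lra|]. rewrite part_S.
  enough (0 <= Oterm Qs (S N)) by lra. unfold Oterm.
  destruct (Nat.even (S N)); [lra|].
  pose proof (P_pos Qs q (S N) hQ). pose proof (Q_ge2 Qs q (S N) hQ ltac:(lia)).
  apply Rdiv_le_0_compat; lra.
Qed.

Lemma E_cv : exists A, Un_cv (part (Eterm Qs)) A.
Proof.
  assert (Hg : Un_growing (part (Eterm Qs))).
  { intros N. rewrite part_S. enough (0 <= Eterm Qs (S N)) by lra.
    unfold Eterm. destruct (Nat.even (S N)); [|lra].
    pose proof (P_pos Qs q (S N) hQ). pose proof (Q_ge2 Qs q (S N) hQ ltac:(lia)).
    apply Rdiv_le_0_compat; lra. }
  assert (Hb : has_ub (part (Eterm Qs))).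
  { exists 1. intros x [i ->]. pose proof (EO i). pose proof (O_nonneg i).
    pose proof (P_pos Qs q i hQ). assert (0 < / prodQ Qs i) by (apply Rinv_0_lt_compat; lra). lra. }
  destruct (growing_cv _ Hg Hb) as [A HA]. exists A. exact HA.
Qed.

Lemma a0_sum M : sum_f_R0 (fun n => (INR (Qs (2 * (n + 1))%nat) - 1) / prodQ Qs (2 * (n + 1))) M
  = part (Eterm Qs) (2 * M + 2).
Proof.
  induction M as [|M IH].
  - simpl. unfold Eterm. simpl. lra.
  - rewrite tech5, IH.
    replace (2 * S M + 2)%nat with (S (S (2 * M + 2))) by lia.
    rewrite !part_S.
    replace (S (2 * M + 2)) with (2 * (M + 1) + 1)%nat by lia.
    replace (S (2 * (M + 1) + 1)) with (2 * (S M + 1))%nat by lia.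
    assert (E1 : Eterm Qs (2*(M+1)+1) = 0) by (unfold Eterm; rewrite Nat.even_odd; reflexivity).
    assert (E2 : Eterm Qs (2*(S M+1)) = (INR (Qs (2 * (S M + 1))) - 1) / prodQ Qs (2 * (S M + 1)))
      by (unfold Eterm; rewrite Nat.even_even; reflexivity).
    rewrite E1, E2. lra.
Qed.

Lemma a0_eq A : Un_cv (part (Eterm Qs)) A -> a0 Qs = A.
Proof.
  intros HA.
  assert (Hs : infinite_sum (fun n => (INR (Qs (2 * (n + 1))%nat) - 1) / prodQ Qs (2 * (n + 1))) A).
  { intros e He. destruct (HA e He) as [N HN]. exists N. intros n Hn. rewrite a0_sum. apply HN. lia. }
  unfold a0, series_sum.
  pose proof (epsilon_spec (inhabits 0) (fun l => infinite_sum (fun n => (INR (Qs (2 * (n + 1))%nat) - 1) / prodQ Qs (2 * (n + 1))) l) (ex_intro _ A Hs)) as H.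
  exact (uniqueness_sum _ _ _ H Hs).
Qed.

Variables (z : R) (hz : 0 <= z <= 1).

Lemma xterm_eps k : (1 <= k)%nat -> xterm Qs (epsOf Qs z) k = INR (dl Qs z k) / prodQ Qs k - Oterm Qs k.
Proof.
  intros Hk. destruct k as [|k]; [lia|].
  destruct (dl_spec Qs q hq hQ z hz k) as [Hd _].
  pose proof (P_pos Qs q (S k) hQ).
  unfold xterm, epsOf, Oterm. rewrite m1_even.
  destruct (Nat.even (S k)).
  - field. lra.
  - destruct (hQ (S k) Hk). rewrite !minus_INR by lia. change (INR 1) with 1. field. lra.
Qed.

Lemma xpart N : part (xterm Qs (epsOf Qs z)) N = part (fun k => INR (dl Qs z k) / prodQ Qs k) N - part (Oterm Qs) N.
Proof.
  induction N as [|N IH]; [simpl; lra|]. rewrite !part_S, IH, xterm_eps by lia. lra.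
Qed.

Lemma zsP_cv : Un_cv (fun N => zs Qs z N / prodQ Qs N) 0.
Proof.
  intros e He. destruct (P_cv Qs q hQ e He) as [N HN]. exists N. intros n Hn.
  specialize (HN n Hn). unfold Rdist in *. rewrite Rminus_0_r in *.
  pose proof (zs_range Qs q hq hQ z hz n). pose proof (P_pos Qs q n hQ).
  assert (0 < / prodQ Qs n) by (apply Rinv_0_lt_compat; lra).
  rewrite Rabs_pos_eq in HN by lra. rewrite Rabs_pos_eq by (unfold Rdiv; nra).
  unfold Rdiv. nra.
Qed.

End S1.

Section S2.
Variables (Qs : nat -> nat) (q : nat) (hq : (2 <= q)%nat) (hQ : HQ Qs q) (z : R) (hz : 0 <= z <= 1).

Lemma not_second : ~ second_form Qs (epsOf Qs z).
Proof.
  intros [m [Hm1 [Hm2 Ht]]].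
  assert (Hdl : forall k, (1 <= k)%nat -> (dl Qs z k <= Qs k - 1)%nat).
  { intros k Hk. destruct k as [|k]; [lia|]. apply (dl_spec Qs q hq hQ z hz k). }
  destruct m as [|m']; [lia|].
  pose proof (dl_spec Qs q hq hQ z hz m') as [_ [_ Hopt]].
  pose proof (zs_S Qs z m') as Hz.
  destruct (Nat.even (S m')) eqn:He.
  -
    destruct (proj1 (Nat.even_spec _) He) as [a Ha].
    assert (Htail : forall i, dl Qs z (S m' + S i) = (Qs (S m' + S i) - 1)%nat).
    { intros i. destruct (Nat.Even_or_Odd i) as [[j Hj]|[j Hj]].
      - destruct (Ht j) as [T1 _]. replace (S m' + 1 + 2 * j)%nat with (S m' + S i)%nat in T1 by lia.
        unfold epsOf in T1.
        replace (S m' + S i)%nat with (2 * (a + j) + 1)%nat in T1 by lia. rewrite Nat.even_odd in T1.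
        replace (S m' + S i)%nat with (2 * (a + j) + 1)%nat by lia.
        pose proof (Hdl (2 * (a + j) + 1)%nat ltac:(lia)). pose proof (proj1 (hQ (2 * (a + j) + 1)%nat ltac:(lia))). lia.
      - destruct (Ht j) as [_ T2]. replace (S m' + 2 + 2 * j)%nat with (S m' + S i)%nat in T2 by lia.
        unfold epsOf in T2.
        replace (S m' + S i)%nat with (2 * (a + j + 1))%nat in T2 by lia. rewrite Nat.even_even in T2.
        replace (S m' + S i)%nat with (2 * (a + j + 1))%nat by lia. exact T2. }
    assert (Hgrow : forall j, 2 ^ j * (1 - zs Qs z (S m')) <= 1 - zs Qs z (S m' + j)).
    { induction j as [|j IH].
      - rewrite Nat.add_0_r. simpl. lra.
      - replace (S m' + S j)%nat with (S (S m' + j)) by lia. rewrite (zs_S Qs z (S m' + j)).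
        replace (S (S m' + j)) with (S m' + S j)%nat by lia. rewrite Htail.
        pose proof (Q_ge2 Qs q (S m' + S j) hQ ltac:(lia)).
        rewrite minus_INR by (pose proof (proj1 (hQ (S m' + S j)%nat ltac:(lia))); lia).
        change (INR 1) with 1.
        pose proof (zs_range Qs q hq hQ z hz (S m' + j)).
        pose proof (zs_range Qs q hq hQ z hz (S m')).
        simpl pow. nra. }
    assert (Hz1 : zs Qs z (S m') = 1).
    { pose proof (zs_range Qs q hq hQ z hz (S m')).
      assert (1 - zs Qs z (S m') = 0); [|lra].
      apply zero_of_pow2; [lra|]. intros j. pose proof (Hgrow j).
      pose proof (zs_range Qs q hq hQ z hz (S m' + j)). lra. }
    try rewrite He in Hopt; cbn iota beta in Hopt.
    assert (Hem : epsOf Qs z (S m') = dl Qs z (S m')).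
    { unfold epsOf. rewrite He. reflexivity. }
    rewrite Hem in Hm2.
    assert (S (dl Qs z (S m')) <= dl Qs z (S m'))%nat; [|lia].
    apply Hopt; [lia|]. rewrite S_INR. rewrite Hz1 in Hz. lra.
  -
    assert (Hodd : Nat.Odd (S m')).
    { destruct (Nat.Even_or_Odd (S m')) as [Hev|]; auto. apply Nat.even_spec in Hev. congruence. }
    destruct Hodd as [a Ha].
    assert (Htail : forall i, dl Qs z (S m' + S i) = 0%nat).
    { intros i. destruct (Nat.Even_or_Odd i) as [[j Hj]|[j Hj]].
      - destruct (Ht j) as [T1 _]. replace (S m' + 1 + 2 * j)%nat with (S m' + S i)%nat in T1 by lia.
        unfold epsOf in T1.
        replace (S m' + S i)%nat with (2 * (a + j + 1))%nat in T1 by lia. rewrite Nat.even_even in T1.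
        replace (S m' + S i)%nat with (2 * (a + j + 1))%nat by lia. exact T1.
      - destruct (Ht j) as [_ T2]. replace (S m' + 2 + 2 * j)%nat with (S m' + S i)%nat in T2 by lia.
        unfold epsOf in T2.
        replace (S m' + S i)%nat with (2 * (a + j + 1) + 1)%nat in T2 by lia. rewrite Nat.even_odd in T2.
        replace (S m' + S i)%nat with (2 * (a + j + 1) + 1)%nat by lia.
        pose proof (Hdl (2 * (a + j + 1) + 1)%nat ltac:(lia)). pose proof (proj1 (hQ (2 * (a + j + 1) + 1)%nat ltac:(lia))). lia. }
    assert (Hgrow : forall j, 2 ^ j * zs Qs z (S m') <= zs Qs z (S m' + j)).
    { induction j as [|j IH].
      - rewrite Nat.add_0_r. simpl. lra.
      - replace (S m' + S j)%nat with (S (S m' + j)) by lia. rewrite (zs_S Qs z (S m' + j)).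
        replace (S (S m' + j)) with (S m' + S j)%nat by lia. rewrite Htail.
        pose proof (Q_ge2 Qs q (S m' + S j) hQ ltac:(lia)).
        change (INR 0) with 0.
        pose proof (zs_range Qs q hq hQ z hz (S m' + j)).
        pose proof (zs_range Qs q hq hQ z hz (S m')).
        simpl pow. nra. }
    assert (Hz0 : zs Qs z (S m') = 0).
    { pose proof (zs_range Qs q hq hQ z hz (S m')).
      apply zero_of_pow2; [lra|]. intros j. pose proof (Hgrow j).
      pose proof (zs_range Qs q hq hQ z hz (S m' + j)). lra. }
    try rewrite He in Hopt; cbn iota beta in Hopt.
    assert (Hem : epsOf Qs z (S m') = (Qs (S m') - 1 - dl Qs z (S m'))%nat).
    { unfold epsOf. rewrite He. reflexivity. }
    rewrite Hem in Hm2.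
    assert (Hpos : (1 <= dl Qs z (S m'))%nat) by lia.
    assert (dl Qs z (S m') <= dl Qs z (S m') - 1)%nat; [|lia].
    apply Hopt; [pose proof (Hdl (S m') ltac:(lia)); lia|].
    rewrite minus_INR by lia. change (INR 1) with 1. rewrite Hz0 in Hz. lra.
Qed.

End S2.

Lemma exists_conv Qs q x : (2 <= q)%nat -> HQ Qs q -> a0 Qs - 1 <= x <= a0 Qs ->
  exists eps, conv_repr Qs x eps.
Proof.
  intros hq hQ hx.
  destruct (E_cv Qs q hq hQ) as [A HA]. pose proof (a0_eq Qs q hq A HA) as Ha.
  set (z := x + 1 - a0 Qs).
  assert (hz : 0 <= z <= 1) by (unfold z; lra).
  exists (epsOf Qs z). split; [split|].
  - apply (eps_valid Qs q hq hQ z hz).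
  - apply (proj2 (inf_sum_part (xterm Qs (epsOf Qs z)) x)).
    apply (Un_cv_ext (fun N => (z - zs Qs z N / prodQ Qs N) - ((1 - / prodQ Qs N) - part (Eterm Qs) N))).
    + intros N. rewrite (xpart Qs q hq hQ z hz N).
      pose proof (Zpart Qs q hq hQ z N). pose proof (EO Qs q hq hQ N). lra.
    + replace x with ((z - 0) - ((1 - 0) - A)) by (unfold z; lra).
      apply CV_minus.
      * apply CV_minus; [apply cv_const|]. apply (zsP_cv Qs q hq hQ z hz).
      * apply CV_minus; auto. apply CV_minus; [apply cv_const|]. apply (P_cv Qs q hQ).
  - apply (not_second Qs q hq hQ z hz).
Qed.

Theorem mainTheorem3 (Qs : nat -> nat) (q : nat)
  (hq : (2 <= q)%nat)
  (hQ : forall k, (1 <= k)%nat -> (2 <= Qs k)%nat /\ (Qs k <= q)%nat)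
  (x1 x2 : R)
  (hx1 : a0 Qs - 1 <= x1 <= a0 Qs)
  (hx2 : a0 Qs - 1 <= x2 <= a0 Qs)
  (hlt : x1 < x2) :
  fQ Qs q x1 < fQ Qs q x2.
Proof.
  assert (hQ' : HQ Qs q) by exact hQ.
  assert (Hc : forall x, a0 Qs - 1 <= x <= a0 Qs ->
    valid_digits Qs (digits Qs x) /\ Un_cv (part (xterm Qs (digits Qs x))) x /\
    Un_cv (part (fterm q (digits Qs x))) (fQ Qs q x)).
  { intros x hx.
    pose proof (epsilon_spec (inhabits (fun _ => 0%nat)) (conv_repr Qs x) (exists_conv Qs q x hq hQ' hx)) as [[Hv Hs] _].
    fold (digits Qs x) in Hv, Hs.
    split; [exact Hv|split].
    - apply (proj1 (inf_sum_part (xterm Qs (digits Qs x)) x)). exact Hs.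
    - apply (proj1 (inf_sum_part (fterm q (digits Qs x)) (fQ Qs q x))).
      unfold fQ, series_sum.
      apply (epsilon_spec (inhabits 0) (fun l => infinite_sum (fun n => INR (digits Qs x (n + 1)%nat) / (- INR q) ^ (n + 1)) l)).
      apply (f_conv Qs q (digits Qs x) hq hQ' Hv). }
  destruct (Hc x1 hx1) as [v1 [c1 f1]]. destruct (Hc x2 hx2) as [v2 [c2 f2]].
  exact (compare Qs q _ _ _ _ _ _ hq hQ' v1 v2 c1 c2 f1 f2 hlt).
Qed.
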